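(* Let $L$ be a bounded lattice and $A:L^2\to L$ a uninorm with neutral element $a\in L$. A function $F:L^2\to L$ is $A$-migrative if and only if there exists a function $f:L\to L$ such that $F(x,y)=f(A(x,y))$ for all $x,y\in L$.
   Context: A uninorm on $L$ is a map $A:L^2\to L$ that is commutative, associative, non-decreasing in each argument and has a neutral element $a\in L$ ($A(a,x)=x$ for all $x$). For $\alpha\in L$, $F:L^2\to L$ is $(\alpha,A)$-migrative if $F(A(\alpha,x),y)=F(x,A(\alpha,y))$ for all $x,y\in L$; $F$ is $A$-migrative if it is $(\alpha,A)$-migrative for every $\alpha\in L$. *)

(* Defs.v *)
From HB Require Import structures.
From mathcomp Require Import all_boot all_order.
Set Implicit Arguments. Unset Strict Implicit. Unset Printing Implicit Defensive.
Import Order.TTheory.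
Local Open Scope order_scope.

Definition uninorm (disp : Order.disp_t) (L : tbLatticeType disp)
    (A : L -> L -> L) (a : L) : Prop :=
  [/\ (forall x y, A x y = A y x),
      (forall x y z, A x (A y z) = A (A x y) z),
      (forall x1 x2 y, x1 <= x2 -> A x1 y <= A x2 y),
      (forall x y1 y2, y1 <= y2 -> A x y1 <= A x y2)
    & (forall x, A a x = x)].

Definition migrative_at (L : Type) (A F : L -> L -> L) (alpha : L) : Prop :=
  forall x y, F (A alpha x) y = F x (A alpha y).

Definition migrative (L : Type) (A F : L -> L -> L) : Prop :=
  forall alpha, migrative_at A F alpha.

(* Main.v *)
Require Import Defs.
From HB Require Import structures.
From mathcomp Require Import all_boot all_order.

Theorem mainTheorem6 (disp : Order.disp_t) (L : tbLatticeType disp)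
    (A : L -> L -> L) (a : L) (hA : uninorm A a) (F : L -> L -> L) :
  migrative A F <-> exists f : L -> L, forall x y, F x y = f (A x y).
Proof.
case: hA => C As _ _ N.
split.
- move=> M; exists (fun z => F z a) => x y.
  have := M y x a. rewrite C [A y a]C !N => ->. by [].
- move=> [f Hf] al x y; rewrite !Hf.
  by rewrite [A al x]C -As [A al y]C.
Qed.
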